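(* Let $\mathcal{C}$ be an $R$-coring with a grouplike element $g$, let $B=\{r\in R: rg=gr\}$, and let $\tilde F=\bullet\otimes_B R:\mathcal{M}_B\to\mathcal{M}^{\mathcal{C}}_R$. Suppose there exists an $R$-bimodule map $\chi:\mathcal{C}\otimes_R\mathcal{C}\to R$ such that $c_{(1)}\chi(c_{(2)}\otimes_R d)=\chi(c\otimes_R d_{(1)})d_{(2)}$ for all $c,d\in\mathcal{C}$ and $\chi(g\otimes_R g)=1$. Then $\tilde F$ is fully faithful, i.e. it is separable and naturally full.
   Context: An $R$-coring is an $R$-bimodule $\mathcal{C}$ with coassociative, counital $R$-bimodule maps $\Delta_{\mathcal{C}}(c)=c_{(1)}\otimes_R c_{(2)}$ and $\varepsilon_{\mathcal{C}}:\mathcal{C}\to R$. $g\in\mathcal{C}$ is grouplike if $\Delta_{\mathcal{C}}(g)=g\otimes_R g$ and $\varepsilon_{\mathcal{C}}(g)=1$. $\mathcal{M}^{\mathcal{C}}_R$ is the category of right $\mathcal{C}$-comodules (right $R$-modules with right $R$-linear coassociative counital coaction $M\to M\otimes_R\mathcal{C}$). $B$ is a subring of $R$. For $N\in\mathcal{M}_B$, $N\otimes_B R$ is a right $\mathcal{C}$-comodule with coaction $n\otimes_B r\mapsto (n\otimes_B 1)\otimes_R gr$. A functor is separable (resp. naturally full) if the natural transformation $\mathrm{Hom}(A,A')\to\mathrm{Hom}(FA,FA')$, $f\mapsto F(f)$, has a left (resp. right) inverse natural in $A,A'$. *)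

(* Defs.v *)
(* Tensor products over (noncommutative) rings are not in
   the library; they are handled through their universal property. *)
From HB Require Import structures.
From mathcomp Require Import all_boot all_algebra.
Set Implicit Arguments. Unset Strict Implicit. Unset Printing Implicit Defensive.
Import GRing.Theory.
Local Open Scope ring_scope.

Definition additive_map (U V : zmodType) (f : U -> V) : Prop :=
  forall x y, f (x - y) = f x - f y.

Section Modules.
Variable S : pzRingType.

Definition is_rmod (M : zmodType) (act : M -> S -> M) : Prop :=
  [/\ forall s, additive_map (fun x => act x s),
      forall x r s, act x (r + s) = act x r + act x s,
      forall x, act x 1 = x &
      forall x r s, act (act x r) s = act x (r * s)].

Definition is_lmod (M : zmodType) (act : S -> M -> M) : Prop :=
  [/\ forall s, additive_map (act s),
      forall r s x, act (r + s) x = act r x + act s x,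
      forall x, act 1 x = x &
      forall r s x, act r (act s x) = act (r * s) x].

Definition is_bimod (M : zmodType) (l : S -> M -> M) (r : M -> S -> M) : Prop :=
  [/\ is_lmod l, is_rmod r & forall a x b, l a (r x b) = r (l a x) b].

Section Tensor.
Variables (M : zmodType) (mr : M -> S -> M) (N : zmodType) (nl : S -> N -> N).

Definition balanced (A : zmodType) (beta : M -> N -> A) : Prop :=
  [/\ forall m, additive_map (beta m),
      forall n, additive_map (fun m => beta m n) &
      forall m s n, beta (mr m s) n = beta m (nl s n)].

Definition induced (T A : zmodType) (t : M -> N -> T) (phi : T -> A)
    (beta : M -> N -> A) : Prop :=
  additive_map phi /\ forall m n, phi (t m n) = beta m n.

Definition is_tensor (T : zmodType) (t : M -> N -> T) : Prop :=
  balanced t /\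
  forall (A : zmodType) (beta : M -> N -> A), balanced beta ->
    (exists phi : T -> A, induced t phi beta) /\
    (forall phi psi : T -> A, induced t phi beta -> induced t psi beta ->
       phi =1 psi).
End Tensor.
End Modules.

Section Coring.
Variables (R : pzRingType) (C : zmodType) (lC : R -> C -> C) (rC : C -> R -> C).
(* CC = C (x)_R C, with its canonical R-bimodule structure lCC, rCC *)
Variables (CC : zmodType) (tCC : C -> C -> CC)
          (lCC : R -> CC -> CC) (rCC : CC -> R -> CC).
Variables (CCC : zmodType) (t3 : CC -> C -> CCC).
Variables (Delta : C -> CC) (eps : C -> R).

Definition is_tensor_square : Prop :=
  [/\ is_tensor rC lC tCC,
      (forall r, additive_map (lCC r)) /\ (forall r, additive_map (fun x => rCC x r)),
      forall r c d, lCC r (tCC c d) = tCC (lC r c) d &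
      forall r c d, rCC (tCC c d) r = tCC c (rC d r)].

Definition is_tensor_cube : Prop := is_tensor rCC lC t3.

(* (Delta (x) C) o Delta = (C (x) Delta) o Delta, read in (C (x) C) (x) C *)
Definition coassociative : Prop :=
  forall phi1 : CC -> CCC, induced tCC phi1 (fun x y => t3 (Delta x) y) ->
  forall psi : C -> CC -> CCC,
    (forall x, induced tCC (psi x) (fun u v => t3 (tCC x u) v)) ->
  forall phi2 : CC -> CCC, induced tCC phi2 (fun x y => psi x (Delta y)) ->
  forall c, phi1 (Delta c) = phi2 (Delta c).

(* eps(c_(1)) c_(2) = c = c_(1) eps(c_(2)) *)
Definition counital : Prop :=
  (forall phi : CC -> C, induced tCC phi (fun x y => lC (eps x) y) ->
     forall c, phi (Delta c) = c) /\
  (forall phi : CC -> C, induced tCC phi (fun x y => rC x (eps y)) ->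
     forall c, phi (Delta c) = c).

Definition is_coring : Prop :=
  [/\ is_bimod lC rC,
      additive_map Delta /\
        (forall r c, Delta (lC r c) = lCC r (Delta c)) /\
        (forall r c, Delta (rC c r) = rCC (Delta c) r),
      additive_map eps /\
        (forall r c, eps (lC r c) = r * eps c) /\
        (forall r c, eps (rC c r) = eps c * r),
      coassociative &
      counital].

Definition grouplike (g : C) : Prop := Delta g = tCC g g /\ eps g = 1.

Definition bimod_map_to_R (chi : CC -> R) : Prop :=
  [/\ additive_map chi,
      forall r x, chi (lCC r x) = r * chi x &
      forall r x, chi (rCC x r) = chi x * r].

(* c_(1) chi(c_(2) (x) d) = chi(c (x) d_(1)) d_(2) *)
Definition chi_condition (chi : CC -> R) : Prop :=
  forall (c d : C) (phi psi : CC -> C),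
    induced tCC phi (fun x y => rC x (chi (tCC y d))) ->
    induced tCC psi (fun x y => lC (chi (tCC c x)) y) ->
    phi (Delta c) = psi (Delta d).

Section Functor.
Variables (g : C) (B : pzRingType) (iota : {rmorphism B -> R}).

(* B is (isomorphic via iota to) the subring {r in R | r g = g r} *)
Definition is_coinvariant_subring : Prop :=
  injective iota /\ forall r : R, (exists b, iota b = r) <-> lC r g = rC g r.

(* Data of the comodule  N (x)_B R  attached to a right B-module N:
   T = N (x)_B R with tensor map tN, its right R-action aT,
   TC = T (x)_R C with tensor map tTC, and the coaction
   rho : n (x) r |-> (n (x) 1) (x) g r. *)
Definition induced_comodule (N : zmodType) (nB : N -> B -> N)
    (T : zmodType) (tN : N -> R -> T) (aT : T -> R -> T)
    (TC : zmodType) (tTC : T -> C -> TC) (rho : T -> TC) : Prop :=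
  [/\ is_rmod nB,
      is_tensor nB (fun b r => iota b * r) tN,
      (forall s, additive_map (fun x => aT x s)) /\
        (forall n r s, aT (tN n r) s = tN n (r * s)),
      is_tensor aT lC tTC &
      additive_map rho /\ (forall n r, rho (tN n r) = tTC (tN n 1) (rC g r))].

Section Hom.
Variables (N : zmodType) (nB : N -> B -> N)
          (T : zmodType) (tN : N -> R -> T) (aT : T -> R -> T)
          (TC : zmodType) (tTC : T -> C -> TC) (rho : T -> TC).
Variables (N' : zmodType) (nB' : N' -> B -> N')
          (T' : zmodType) (tN' : N' -> R -> T') (aT' : T' -> R -> T')
          (TC' : zmodType) (tTC' : T' -> C -> TC') (rho' : T' -> TC').

Definition B_linear (h : N -> N') : Prop :=
  additive_map h /\ forall n b, h (nB n b) = nB' (h n) b.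

Definition comodule_map (f : T -> T') : Prop :=
  [/\ additive_map f,
      forall x r, f (aT x r) = aT' (f x) r &
      forall fC : TC -> TC', induced tTC fC (fun x c => tTC' (f x) c) ->
        forall x, rho' (f x) = fC (rho x)].

Definition Ftilde_of (h : N -> N') (Fh : T -> T') : Prop :=
  induced tN Fh (fun n r => tN' (h n) r).

Definition Ftilde_fully_faithful_at : Prop :=
  (forall h h' : N -> N', B_linear h -> B_linear h' ->
     forall Fh Fh' : T -> T', Ftilde_of h Fh -> Ftilde_of h' Fh' ->
       Fh =1 Fh' -> h =1 h') /\
  (forall f : T -> T', comodule_map f ->
     exists h : N -> N', B_linear h /\ Ftilde_of h f).
End Hom.
End Functor.
End Coring.

(* Main.v *)
Require Import Defs.
From HB Require Import structures.
From mathcomp Require Import all_boot all_algebra.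
Import GRing.Theory.
Local Open Scope ring_scope.
Set Implicit Arguments.

Lemma am0 (U V : zmodType) (f : U -> V) : additive_map f -> f 0 = 0.
Proof. by move=> H; rewrite -(subrr 0) H subrr. Qed.
Lemma amN (U V : zmodType) (f : U -> V) : additive_map f -> forall x, f (- x) = - f x.
Proof. by move=> H x; rewrite -sub0r H (am0 H) sub0r. Qed.
Lemma amD (U V : zmodType) (f : U -> V) : additive_map f -> forall x y, f (x + y) = f x + f y.
Proof.
move=> H x y; have -> : x + y = x - (- y) by rewrite opprK.
by rewrite H (amN H) opprK.
Qed.
Lemma amFromD (U V : zmodType) (f : U -> V) :
  (forall x y, f (x + y) = f x + f y) -> additive_map f.
Proof.
move=> H x y; apply/eqP; rewrite eq_sym subr_eq -H subrK //.
Qed.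
Lemma amComp (U V W : zmodType) (f : V -> W) (h : U -> V) :
  additive_map f -> additive_map h -> additive_map (fun x => f (h x)).
Proof. by move=> Hf Hh x y; rewrite Hh Hf. Qed.
Lemma amAdd (U V : zmodType) (f h : U -> V) :
  additive_map f -> additive_map h -> additive_map (fun x => f x + h x).
Proof. by move=> Hf Hh x y; rewrite Hf Hh opprD addrACA. Qed.

Lemma tensor_ext (S : pzRingType) (M N T A : zmodType) (mr : M -> S -> M)
  (nl : S -> N -> N) (t : M -> N -> T) :
  is_tensor mr nl t -> forall phi psi : T -> A, additive_map phi -> additive_map psi ->
  (forall m n, phi (t m n) = psi (t m n)) -> phi =1 psi.
Proof.
move=> [[t1 t2 t3] U] phi psi Hphi Hpsi E.
have Hb : balanced mr nl (fun m n => phi (t m n)).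
  split.
  - by move=> m; apply: amComp.
  - by move=> n; apply: amComp.
  - by move=> m s n; rewrite t3.
have [_ Hu] := U A _ Hb.
apply: Hu; split => //; move=> *; rewrite E.
Qed.

Lemma tensor_ex (S : pzRingType) (M N T A : zmodType) (mr : M -> S -> M)
  (nl : S -> N -> N) (t : M -> N -> T) :
  is_tensor mr nl t -> forall beta : M -> N -> A, balanced mr nl beta ->
  exists phi, induced t phi beta.
Proof. by move=> [_ U] beta Hb; have [] := U A beta Hb. Qed.

Unset Implicit Arguments.
Theorem proposition3p18
  (R : pzRingType) (C : zmodType) (lC : R -> C -> C) (rC : C -> R -> C)
  (CC : zmodType) (tCC : C -> C -> CC) (lCC : R -> CC -> CC) (rCC : CC -> R -> CC)
  (CCC : zmodType) (t3 : CC -> C -> CCC)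
  (Delta : C -> CC) (eps : C -> R) (g : C)
  (B : pzRingType) (iota : {rmorphism B -> R}) (chi : CC -> R) :
  is_tensor_square lC rC tCC lCC rCC ->
  is_tensor_cube lC rCC t3 ->
  is_coring lC rC tCC lCC rCC t3 Delta eps ->
  grouplike tCC Delta eps g ->
  is_coinvariant_subring lC rC g iota ->
  bimod_map_to_R lCC rCC chi ->
  chi_condition lC rC tCC Delta chi ->
  chi (tCC g g) = 1 ->
  forall (N : zmodType) (nB : N -> B -> N)
         (T : zmodType) (tN : N -> R -> T) (aT : T -> R -> T)
         (TC : zmodType) (tTC : T -> C -> TC) (rho : T -> TC)
         (N' : zmodType) (nB' : N' -> B -> N')
         (T' : zmodType) (tN' : N' -> R -> T') (aT' : T' -> R -> T')
         (TC' : zmodType) (tTC' : T' -> C -> TC') (rho' : T' -> TC'),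
  induced_comodule lC rC g iota nB tN aT tTC rho ->
  induced_comodule lC rC g iota nB' tN' aT' tTC' rho' ->
  Ftilde_fully_faithful_at nB tN aT tTC rho nB' tN' aT' tTC' rho'.
Proof.
move=> HCC _ Hcor [Dg eg] [iota_inj Hcoinv] [chiA chiL chiR] Hchi chigg.
move=> N nB T tN aT TC tTC rho N' nB' T' tN' aT' TC' tTC' rho' HN HN'.
case: HCC => Ht [lCCa rCCa] lCCt rCCt.
have [[tCC1 tCC2 tCCb] _] := Ht.
case: Hcor => [[[lC1 lC2 lC3 lC4] [rC1 rC2 rC3 rC4] lrC] [DA [DL DR]] _ _ _].
have tCCD1 : forall x y d, tCC (x + y) d = tCC x d + tCC y d.
  by move=> x y d; exact: (amD (tCC2 d)).
have chiD : forall x y, chi (x + y) = chi x + chi y by exact: amD chiA.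
have rCD : forall x r s, rC x (r + s) = rC x r + rC x s by [].
have lCD : forall r s x, lC (r + s) x = lC r x + lC s x by [].
pose E r := chi (tCC (rC g r) g).
have Ecoinv : forall r, lC (E r) g = rC g (E r).
  move=> r.
  have Hb1 : balanced rC lC (fun x y => rC x (chi (tCC y g))).
    split.
    - move=> x; apply: amFromD => y1 y2; by rewrite tCCD1 chiD rCD.
    - by move=> y; exact: rC1.
    - by move=> x s y; rewrite rC4 -lCCt chiL.
  have [phi Hphi] := tensor_ex Ht Hb1.
  have Hb2 : balanced rC lC (fun x y => lC (chi (tCC (rC g r) x)) y).
    split.
    - by move=> x; exact: lC1.
    - move=> y; apply: amFromD => x1 x2.
      by rewrite (amD (tCC1 (rC g r))) chiD lCD.
    - by move=> x s y; rewrite lC4 -rCCt chiR.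
  have [psi Hpsi] := tensor_ex Ht Hb2.
  have := Hchi (rC g r) g phi psi Hphi Hpsi.
  rewrite DR Dg rCCt (proj2 Hphi) (proj2 Hpsi) /E => <-.
  by [].
have ex : forall r, exists b, iota b == E r.
  move=> r; have [b Hb] := proj2 (Hcoinv (E r)) (Ecoinv r).
  by exists b; apply/eqP.
pose E' r := xchoose (ex r).
have iE' : forall r, iota (E' r) = E r by move=> r; exact: eqP (xchooseP (ex r)).
have coinv : forall b, lC (iota b) g = rC g (iota b).
  by move=> b; apply/(Hcoinv (iota b)); exists b.
have Eiota : forall b, E (iota b) = iota b.
  by move=> b; rewrite /E -coinv -lCCt chiL chigg mulr1.
have E'iota : forall b, E' (iota b) = b.
  by move=> b; apply: iota_inj; rewrite iE' Eiota.
have E'1 : E' 1 = 1 by rewrite -(rmorph1 iota) E'iota.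
have E'D : forall r s, E' (r + s) = E' r + E' s.
  by move=> r s; apply: iota_inj; rewrite rmorphD !iE' /E rCD tCCD1 chiD.
have E'L : forall b r, E' (iota b * r) = b * E' r.
  move=> b r; apply: iota_inj; rewrite rmorphM !iE' /E.
  by rewrite -rC4 -coinv -lrC -lCCt chiL.
have E'R : forall b r, E' (r * iota b) = E' r * b.
  move=> b r; apply: iota_inj; rewrite rmorphM !iE' /E.
  by rewrite -rC4 tCCb coinv -rCCt chiR.
case: HN' => [[nB'1 nB'2 nB'3 nB'4] HtN' [aT'A aT'E] HtTC' [rho'A rho'E]].
have [[tN'1 tN'2 tN'b] _] := HtN'.
have Hbr : balanced nB' (fun b r => iota b * r) (fun n r => nB' n (E' r)).
  split.
  - move=> n; apply: amFromD => r s; by rewrite E'D nB'2.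
  - by move=> r; exact: nB'1.
  - by move=> n b r; rewrite nB'4 E'L.
have [ret' [retA retE]] := tensor_ex HtN' Hbr.
split.
  move=> h h' _ _ Fh Fh' [_ FhE] [_ Fh'E] Heq n.
  have := congr1 ret' (Heq (tN n 1)).
  by rewrite FhE Fh'E !retE E'1 !nB'3.
move=> f [fA fR fC].
have aT'1 : forall y, aT' y 1 = y.
  apply: (tensor_ext HtN' (phi := fun y => aT' y 1) (psi := id)).
  - exact: aT'A.
  - by [].
  - by move=> n r; rewrite aT'E mulr1.
have aT'D : forall y r s, aT' y (r + s) = aT' y r + aT' y s.
  move=> y r s; move: y;
  apply: (tensor_ext HtN' (phi := fun y => aT' y (r + s)) (psi := fun y => aT' y r + aT' y s)).
  - exact: aT'A.
  - by apply: amAdd; exact: aT'A.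
  - by move=> n t; rewrite !aT'E mulrDr (amD (tN'1 n)).
have aT'M : forall y s t, aT' (aT' y s) t = aT' y (s * t).
  move=> y s t; move: y;
  apply: (tensor_ext HtN' (phi := fun y => aT' (aT' y s) t) (psi := fun y => aT' y (s * t))).
  - by apply: (amComp (f := fun z => aT' z t) (h := fun y => aT' y s)); exact: aT'A.
  - exact: aT'A.
  - by move=> n r; rewrite !aT'E mulrA.
have HbQ : balanced aT' lC (fun y c => aT' y (chi (tCC c g))).
  split.
  - move=> y; apply: amFromD => c d; by rewrite tCCD1 chiD aT'D.
  - by move=> c; exact: aT'A.
  - by move=> y s c; rewrite aT'M -lCCt chiL.
have [Q [QA QE]] := tensor_ex HtTC' HbQ.
have K : forall x, Q (rho' x) = tN' (ret' x) 1.
  apply: (tensor_ext HtN' (phi := fun x => Q (rho' x)) (psi := fun x => tN' (ret' x) 1)).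
  - exact: (amComp (f := Q) (h := rho')).
  - by apply: (amComp (f := fun z => tN' z 1) (h := ret')) => //; exact: tN'2.
  - move=> n r; rewrite rho'E QE aT'E mul1r -/(E r) -iE' retE.
    by rewrite tN'b mulr1.
have key : forall x, rho' x = tTC' x g -> x = tN' (ret' x) 1.
  by move=> x Hx; rewrite -K Hx QE chigg aT'1.
case: HN => [_ HtN [aTA aTE] HtTC [rhoA rhoE]].
have [[tN1 tN2 tNb] _] := HtN.
have [[tTC'1 tTC'2 tTC'b] _] := HtTC'.
have Hbf : balanced aT lC (fun x c => tTC' (f x) c).
  split.
  - by move=> x; exact: tTC'1.
  - by move=> c; apply: (amComp (f := fun z => tTC' z c) (h := f)) => //; exact: tTC'2.
  - by move=> x s c; rewrite fR tTC'b.
have [fC' HfC] := tensor_ex HtTC Hbf.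
have retR : forall y b, ret' (aT' y (iota b)) = nB' (ret' y) b.
  move=> y b; move: y.
  apply: (tensor_ext HtN' (phi := fun y => ret' (aT' y (iota b))) (psi := fun y => nB' (ret' y) b)).
  - by apply: (amComp (f := ret') (h := fun z => aT' z (iota b))) => //; exact: aT'A.
  - by apply: (amComp (f := fun z => nB' z b) (h := ret')) => //; exact: nB'1.
  - by move=> n r; rewrite aT'E !retE E'R nB'4.
have coinvf : forall n, f (tN n 1) = tN' (ret' (f (tN n 1))) 1.
  move=> n; apply: key.
  by rewrite (fC _ HfC) rhoE rC3 (proj2 HfC).
exists (fun n => ret' (f (tN n 1))); split.
  split.
  - apply: (amComp (f := ret') (h := fun n => f (tN n 1))) => //.
    by apply: (amComp (f := f) (h := fun n => tN n 1)) => //; exact: tN2.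
  - move=> n b /=.
    by rewrite tNb mulr1 -[iota b]mul1r -aTE fR retR.
split => // n r.
by rewrite -[r]mul1r -aTE fR -aT'E -coinvf.
Qed.
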